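(* Let $\mathbf{a},\mathbf{b}\in\mathbb{R}^n$ have strictly positive entries with $\|\mathbf{a}\|_1=\|\mathbf{b}\|_1=d$. Then the undirected bipartite product graph $G(\mathbf{a},\mathbf{b})$ is a $1/2$-expander, i.e. for every $\emptyset\subset S\subset V$, $$\frac{\delta(S)}{\min\{\operatorname{vol}(S),\operatorname{vol}(V\setminus S)\}}\ge\frac12.$$
   Context: $G(\mathbf{a},\mathbf{b})$ is the undirected weighted graph on vertex set $V=A\cup B$ with $A=\{1,\dots,n\}$, $B=\{n+1,\dots,2n\}$, in which vertex $i\in A$ and vertex $n+j\in B$ are joined by an edge of weight $\mathbf{a}(i)\mathbf{b}(j)/d$, and there are no other edges (so vertex $i\in A$ has degree $\mathbf{a}(i)$ and $n+j\in B$ has degree $\mathbf{b}(j)$). For a weighted undirected graph, $\delta(S)$ is the total weight of edges with exactly one endpoint in $S$ and $\operatorname{vol}(S)$ is the sum of weighted degrees of vertices in $S$. *)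

(* Defs.v *)
From mathcomp Require Import all_boot all_order all_algebra.
Set Implicit Arguments. Unset Strict Implicit. Unset Printing Implicit Defensive.
Import Order.TTheory GRing.Theory Num.Theory.
Local Open Scope ring_scope.

(* Vertex set V = A ∪ B, with A = inl 'I_n (vertices 1..n) and
   B = inr 'I_n (vertices n+1..2n). *)
Definition vert (n : nat) : finType := ('I_n + 'I_n)%type.

Definition Gw (R : fieldType) (n : nat) (a b : 'I_n -> R) (d : R)
    (u v : vert n) : R :=
  match u, v with
  | inl i, inr j => a i * b j / d
  | inr j, inl i => a i * b j / d
  | _, _ => 0
  end.

Definition wdeg (R : fieldType) (n : nat) (w : vert n -> vert n -> R)
    (u : vert n) : R := \sum_(v : vert n) w u v.

Definition vol (R : fieldType) (n : nat) (w : vert n -> vert n -> R)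
    (S : {set vert n}) : R := \sum_(u in S) wdeg w u.

Definition cut (R : fieldType) (n : nat) (w : vert n -> vert n -> R)
    (S : {set vert n}) : R := \sum_(u in S) \sum_(v in ~: S) w u v.

(* Main.v *)
Require Import Defs.
From mathcomp Require Import all_boot all_order all_algebra.
From mathcomp Require Import ring lra.
Import Order.TTheory GRing.Theory Num.Theory.
Local Open Scope ring_scope.

Section H.
Variables (R : realFieldType) (n : nat) (a b : 'I_n -> R) (d : R).
Hypothesis hd : d != 0.
Hypothesis sa : \sum_i a i = d.
Hypothesis sb : \sum_i b i = d.

Definition aS (T : {set vert n}) := \sum_(i | inl i \in T) a i.
Definition bS (T : {set vert n}) := \sum_(j | inr j \in T) b j.

Lemma wdegE u : wdeg (Gw a b d) u = match u with inl i => a i | inr j => b j end.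
Proof.
rewrite /wdeg big_sumType /=.
case: u => [i|j] /=.
- rewrite big1 ?add0r //.
  by rewrite -mulr_suml -mulr_sumr sb mulfK.
- rewrite [X in _ + X]big1 ?addr0 //.
  by rewrite -!mulr_suml sa [d * _]mulrC mulfK.
Qed.

Lemma volE T : vol (Gw a b d) T = aS T + bS T.
Proof.
rewrite /vol big_sumType.
by congr (_ + _); apply: eq_bigr => i _; rewrite wdegE.
Qed.

Lemma cutE T : cut (Gw a b d) T = (aS T * bS (~: T) + bS T * aS (~: T)) / d.
Proof.
rewrite /cut big_sumType mulrDl /aS /bS !mulr_suml.
congr (_ + _); apply: eq_bigr => i _;
  rewrite big_sumType /=.
- by rewrite big1 ?add0r // mulr_sumr mulr_suml.
- rewrite [X in _ + X]big1 ?addr0 // mulr_sumr mulr_suml; apply: eq_bigr => j _.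
  by rewrite [b i * _]mulrC.
Qed.

Lemma aSC T : aS T + aS (~: T) = d.
Proof.
rewrite -sa /aS (bigID (fun i => inl i \in T) predT) /=.
by congr (_ + _); apply: eq_bigl => i; rewrite in_setC.
Qed.

Lemma bSC T : bS T + bS (~: T) = d.
Proof.
rewrite -sb /bS (bigID (fun i => inr i \in T) predT) /=.
by congr (_ + _); apply: eq_bigl => i; rewrite in_setC.
Qed.

End H.
Arguments aS {R n} a T.
Arguments bS {R n} b T.
Arguments cutE {R n a b d}.
Arguments aSC {R n a d}.
Arguments bSC {R n b d}.
Arguments volE {R n a b d}.

Lemma sum_pos (R : realFieldType) n (f : 'I_n -> R) (P : pred 'I_n) :
  (forall i, 0 < f i) -> 0 <= \sum_(i | P i) f i.
Proof. by move=> h; apply: sumr_ge0 => i _; exact: ltW. Qed.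

Lemma pos_of_mem (R : realFieldType) n (a b : 'I_n -> R) (T : {set vert n}) :
  (forall i, 0 < a i) -> (forall i, 0 < b i) -> T != set0 ->
  0 < aS a T + bS b T.
Proof.
move=> ha hb /set0Pn [[i|j] hi].
- rewrite /aS (bigD1 i) //= -addrA ltr_wpDr //.
  by rewrite addr_ge0 // sum_pos.
- rewrite /bS (bigD1 j) //= addrCA ltr_wpDr //.
  by rewrite addr_ge0 // sum_pos.
Qed.

Theorem lemma5p6 (R : realFieldType) (n : nat) (a b : 'I_n -> R) (d : R) :
  (forall i, 0 < a i) -> (forall i, 0 < b i) ->
  \sum_(i < n) `|a i| = d -> \sum_(i < n) `|b i| = d ->
  forall S : {set vert n}, S != set0 -> S != [set: vert n] ->
  cut (Gw a b d) S / Num.min (vol (Gw a b d) S) (vol (Gw a b d) (~: S))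
    >= 1 / 2.
Proof.
move=> ha hb sa sb S S0 ST.
have sa' : \sum_i a i = d by rewrite -sa; apply: eq_bigr => i _; rewrite ger0_norm // ltW.
have sb' : \sum_i b i = d by rewrite -sb; apply: eq_bigr => i _; rewrite ger0_norm // ltW.
have p1 := @pos_of_mem R n a b _ ha hb S0.
have SC0 : ~: S != set0 by apply: contraNneq ST => h; rewrite -[S]setCK h setC0.
have p2 := @pos_of_mem R n a b _ ha hb SC0.
have hA := aSC sa' S. have hB := bSC sb' S.
have x0 : 0 <= aS a S by apply: sum_pos.
have y0 : 0 <= bS b S by apply: sum_pos.
have x1 : 0 <= aS a (~: S) by apply: sum_pos.
have y1 : 0 <= bS b (~: S) by apply: sum_pos.
have dpos : 0 < d by lra.
have hd : d != 0 by rewrite gt_eqF.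
rewrite cutE !(volE hd sa' sb').
set x := aS a S in x0 p1 hA *; set y := bS b S in y0 p1 hB *.
set x' := aS a (~: S) in x1 p2 hA *; set y' := bS b (~: S) in y1 p2 hB *.
have -> : x' = d - x by lra.
have -> : y' = d - y by lra.
have hx : x <= d by lra. have hy : y <= d by lra.
have e1 : 0 <= (x - y) ^+ 2 by apply: sqr_ge0.
have hC : 0 <= (d - x) * (d - y) by apply: mulr_ge0; lra.
have hC2 : 0 <= x * y by apply: mulr_ge0.
have e2 : 0 <= (d - x - (d - y)) ^+ 2 by apply: sqr_ge0.
rewrite ler_pdivlMr; last first.
  by rewrite /Num.min; case: ifP => _; lra.
rewrite ler_pdivlMr //.
rewrite /Num.min; case: ifP => hm.
- have hxy : x + y <= d by move/ltW: hm; lra.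
  have h3 : 0 <= (x + y) * (d - x - y) by apply: mulr_ge0; lra.
  rewrite expr2 in e1. nra.
- have hxy : d <= x + y by move/negbT: hm; rewrite -leNgt; lra.
  have h3 : 0 <= (d - x + (d - y)) * (x + y - d) by apply: mulr_ge0; lra.
  rewrite expr2 in e2. nra.
Qed.
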